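(* For every integer $n\geq 1$, $$c_n(231,1432 : 231)=c_n(312,3214 : 312)=L_{n+1}-\left\lceil \tfrac{n}{2}\right\rceil-1,$$ where $L_m$ is the $m$-th Lucas number ($L_0=2$, $L_1=1$, $L_m=L_{m-1}+L_{m-2}$ for $m\ge 2$).
   Context: $S_n$ is the symmetric group on $[n]=\{1,\dots,n\}$, and a permutation $\pi\in S_n$ is written in one-line notation $\pi=\pi_1\pi_2\cdots\pi_n$ with $\pi_i=\pi(i)$. For $\tau\in S_k$, $k\le n$, $\pi$ contains $\tau$ if there are indices $i_1<\dots<i_k$ with $\pi_{i_s}>\pi_{i_t}$ iff $\tau_s>\tau_t$ for all $1\le s<t\le k$; otherwise $\pi$ avoids $\tau$. $\pi^2$ denotes the composition $\pi\circ\pi$. For patterns $\sigma_1,\sigma_2,\rho$, $c_n(\sigma_1,\sigma_2 : \rho)$ denotes the number of permutations $\pi\in S_n$ such that $\pi$ avoids both $\sigma_1$ and $\sigma_2$ and $\pi^2$ avoids $\rho$. *)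

(* Defs.v *)
From mathcomp Require Import all_boot all_order all_fingroup.
Set Implicit Arguments. Unset Strict Implicit. Unset Printing Implicit Defensive.

(* A permutation pi of S_n acts on 'I_n = {0,...,n-1}, standing for [n]
   shifted down by one; pi_i is (pi i). *)
Definition contains (n : nat) (pi : 'S_n) (tau : seq nat) : bool :=
  [exists f : {ffun 'I_(size tau) -> 'I_n},
     [forall s : 'I_(size tau), forall t : 'I_(size tau),
        (s < t) ==> ((f s < f t) &&
          ((pi (f s) > pi (f t)) == (nth 0 tau s > nth 0 tau t)))]].

Definition avoids (n : nat) (pi : 'S_n) (tau : seq nat) : bool :=
  ~~ contains pi tau.

Definition cn (n : nat) (sigma1 sigma2 rho : seq nat) : nat :=
  #|[set pi : 'S_n | [&& avoids pi sigma1, avoids pi sigma2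
                       & avoids (pi * pi)%g rho]]|.

Fixpoint lucas (m : nat) : nat :=
  match m with
  | 0 => 2
  | 1 => 1
  | (m'.+1 as k).+1 => lucas k + lucas m'
  end.

(* Main.v *)
Require Import Defs.
From mathcomp Require Import all_boot all_order all_fingroup zify.
Set Implicit Arguments. Unset Strict Implicit. Unset Printing Implicit Defensive.

Notation "w `@ i" := (nth 0 w i) (at level 3, format "w `@ i").

Definition c231 (w : seq nat) : Prop :=
  exists i j k, [/\ i < j, j < k, k < size w & w`@k < w`@i < w`@j].
Definition c1432 (w : seq nat) : Prop :=
  exists i j k l, [/\ i < j, j < k, k < l, l < size w & w`@i < w`@l < w`@k /\ w`@k < w`@j].
Definition sq (w : seq nat) := map (nth 0 w) w.
Definition good w := [/\ ~ c231 w, ~ c1432 w & ~ c231 (sq w)].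
Definition isperm n (w : seq nat) := [&& uniq w, size w == n & all (fun x => x < n) w].

Lemma isperm_lt n w i : isperm n w -> i < n -> w`@i < n.
Proof.
case/and3P=> _ /eqP sz /allP al lt; apply: al; apply: mem_nth. rewrite sz. exact lt.
Qed.

Lemma isperm_inj n w i j : isperm n w -> i < n -> j < n -> w`@i = w`@j -> i = j.
Proof.
case/and3P=> u /eqP sz _ li lj e; apply/eqP; rewrite -(nth_uniq 0 _ _ u) ?sz //; exact/eqP.
Qed.

Lemma isperm_surj n w v : isperm n w -> v < n -> exists2 i, i < n & w`@i = v.
Proof.
case/and3P=> u /eqP sz /allP al lv.
have sub : {subset w <= iota 0 n} by move=> x /al; rewrite mem_iota.
have [_ eqm] := uniq_min_size u sub (eq_leq (etrans (size_iota 0 n) (esym sz))).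
have vin : v \in w by rewrite eqm mem_iota.
exists (index v w); first by rewrite -sz index_mem.
exact: nth_index.
Qed.

Lemma sq_nth w i : i < size w -> (sq w)`@i = w`@(w`@i).
Proof. by move=> h; rewrite /sq (nth_map 0). Qed.

Lemma size_sq w : size (sq w) = size w.
Proof. by rewrite size_map. Qed.

Lemma mk231 w i j k : i < j -> j < k -> k < size w -> w`@k < w`@i -> w`@i < w`@j -> c231 w.
Proof. by move=> *; exists i, j, k; split=> //; apply/andP. Qed.

Lemma mk1432 w i j k l : i < j -> j < k -> k < l -> l < size w ->
  w`@i < w`@l -> w`@l < w`@k -> w`@k < w`@j -> c1432 w.
Proof. by move=> *; exists i, j, k, l; split=> //; split=> //; apply/andP. Qed.

Lemma mksq231 w i j k : i < j -> j < k -> k < size w ->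
  w`@(w`@k) < w`@(w`@i) -> w`@(w`@i) < w`@(w`@j) -> c231 (sq w).
Proof.
move=> ij jk ks h1 h2; apply: (mk231 ij jk); rewrite ?size_sq ?sq_nth //; lia.
Qed.


Lemma nth_catl v u i : i < size v -> (v ++ u)`@i = v`@i.
Proof. by move=> h; rewrite nth_cat h. Qed.

Lemma c231_catl v u : c231 v -> c231 (v ++ u).
Proof.
case=> i [j [k [ij jk kv /andP[h1 h2]]]].
apply: (mk231 ij jk); rewrite ?size_cat ?nth_catl; lia.
Qed.

Lemma c1432_catl v u : c1432 v -> c1432 (v ++ u).
Proof.
case=> i [j [k [l [ij jk kl lv [/andP[h1 h2] h3]]]]].
apply: (mk1432 ij jk kl); rewrite ?size_cat ?nth_catl; lia.
Qed.

Lemma mem_cat_nth (v u : seq nat) k : k < size (v ++ u) -> size v <= k -> (v ++ u)`@k \in u.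
Proof.
move=> h1 h2; rewrite nth_cat ltnNge h2 /=; rewrite size_cat in h1.
have hh : k - size v < size u by lia.
exact: mem_nth hh.
Qed.

Lemma c231_cat_big (v u : seq nat) M : (forall x, x \in u -> M <= x.+1) ->
  (forall x, x \in v ++ u -> x <= M) -> c231 (v ++ u) -> c231 v.
Proof.
move=> hu hM [i [j [k [ij jk kv /andP[h1 h2]]]]].
case: (ltnP k (size v)) => kl.
  apply: (mk231 ij jk kl); move: h1 h2; rewrite !nth_catl; lia.
have hk : M <= ((v ++ u)`@k).+1 := hu _ (mem_cat_nth kv kl).
have hj : (v ++ u)`@j <= M := hM _ (mem_nth 0 (ltn_trans jk kv)). lia.
Qed.

Lemma c1432_cat_big (v u : seq nat) M : (forall x, x \in u -> M <= x.+1) ->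
  (forall x, x \in v ++ u -> x <= M) -> c1432 (v ++ u) -> c1432 v.
Proof.
move=> hu hM [i [j [k [l [ij jk kl lv [/andP[h1 h2] h3]]]]]].
case: (ltnP l (size v)) => ll.
  apply: (mk1432 ij jk kl ll); move: h1 h2 h3; rewrite !nth_catl; lia.
have hk : M <= ((v ++ u)`@l).+1 := hu _ (mem_cat_nth lv ll).
have hj : (v ++ u)`@j <= M := hM _ (mem_nth 0 (ltn_trans jk (ltn_trans kl lv))). lia.
Qed.

Lemma isperm_all n w x : isperm n w -> x \in w -> x < n.
Proof. by case/and3P=> _ _ /allP; apply. Qed.

Lemma sq_all n w x : isperm n w -> x \in sq w -> x < n.
Proof.
move=> pw /mapP[y yw ->]; have yn := isperm_all pw yw.
apply: (isperm_lt pw yn).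
Qed.

Lemma sq_cat (v u : seq nat) : (forall x, x \in v -> x < size v) -> sq (v ++ u) = sq v ++ map (nth 0 (v ++ u)) u.
Proof.
move=> hv; rewrite /sq map_cat; congr (_ ++ _); apply/eq_in_map => x /hv xv.
by rewrite nth_cat xv.
Qed.

Lemma isperm_cat1 m v : isperm m v -> isperm m.+1 (v ++ [:: m]).
Proof.
case/and3P=> u /eqP sz /allP al; apply/and3P; split.
- rewrite cat_uniq u /= andbT orbF; apply/negP => /al; lia.
- by rewrite size_cat sz addn1.
- apply/allP => x; rewrite mem_cat inE => /orP[/al|/eqP->]; lia.
Qed.

Lemma isperm_cat2 m v : isperm m v -> isperm m.+2 (v ++ [:: m.+1; m]).
Proof.
case/and3P=> u /eqP sz /allP al; apply/and3P; split.
- rewrite cat_uniq u /= inE orbF andbT; apply/andP; split.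
  + by apply/negP => /orP[] /al; lia.
  + lia.
- by rewrite size_cat sz addn2.
- apply/allP => x; rewrite mem_cat !inE => /orP[/al|/orP[/eqP->|/eqP->]]; lia.
Qed.

Lemma good_cat1 m v : isperm m v -> (good (v ++ [:: m]) <-> good v).
Proof.
move=> pv; have pw := isperm_cat1 pv.
have hv : forall x, x \in v -> x < size v.
  by move=> x; case/and3P: (pv) => _ /eqP -> _ /(isperm_all pv).
have esq : sq (v ++ [:: m]) = sq v ++ [:: m].
  rewrite sq_cat //= nth_cat; case/and3P: pv => _ /eqP -> _.
  by rewrite ltnn subnn.
have svq : size (sq v) = m by rewrite size_sq; case/and3P: pv => _ /eqP.
split=> -[g1 g2 g3]; split.
- by move/(c231_catl [:: m]).
- by move/(c1432_catl [:: m]).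
- by move/(c231_catl [:: m]); rewrite -esq.
- move=> h; apply: g1; apply: (c231_cat_big (M := m) _ _ h) => // x.
    by rewrite inE => /eqP->.
  by move/(isperm_all pw); lia.
- move=> h; apply: g2; apply: (c1432_cat_big (M := m) _ _ h) => // x.
    by rewrite inE => /eqP->.
  by move/(isperm_all pw); lia.
- rewrite esq => h; apply: g3; apply: (c231_cat_big (M := m) _ _ h) => // x.
    by rewrite inE => /eqP->.
  by rewrite -esq => /(sq_all pw); lia.
Qed.

Lemma good_cat2 m v : isperm m v -> (good (v ++ [:: m.+1; m]) <-> good v).
Proof.
move=> pv; have pw := isperm_cat2 pv.
have hv : forall x, x \in v -> x < size v.
  by move=> x; case/and3P: (pv) => _ /eqP -> _ /(isperm_all pv).
have esq : sq (v ++ [:: m.+1; m]) = sq v ++ [:: m; m.+1].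
  rewrite sq_cat //= !nth_cat; case/and3P: pv => _ /eqP -> _.
  by rewrite ltnn subnn ltnNge leqnSn /= subSnn.
have svq : size (sq v) = m by rewrite size_sq; case/and3P: pv => _ /eqP.
split=> -[g1 g2 g3]; split.
- by move/(c231_catl [:: m.+1; m]).
- by move/(c1432_catl [:: m.+1; m]).
- by move/(c231_catl [:: m; m.+1]); rewrite -esq.
- move=> h; apply: g1; apply: (c231_cat_big (M := m.+1) _ _ h) => // x.
    by rewrite !inE => /orP[] /eqP->.
  by move/(isperm_all pw); lia.
- move=> h; apply: g2; apply: (c1432_cat_big (M := m.+1) _ _ h) => // x.
    by rewrite !inE => /orP[] /eqP->.
  by move/(isperm_all pw); lia.
- rewrite esq => h; apply: g3; apply: (c231_cat_big (M := m.+1) _ _ h) => // x.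
    by rewrite !inE => /orP[] /eqP->.
  by rewrite -esq => /(sq_all pw); lia.
Qed.


Ltac splitifs := repeat match goal with
  |- context [if ?a < ?b then _ else _] => let H := fresh "H" in case: (ltnP a b) => H /= end.

Definition special n t := mkseq (fun i => if i < n - t then n.-1 - i else i - (n - t)) n.

Lemma special_nth n t i : i < n -> (special n t)`@i = if i < n - t then n.-1 - i else i - (n - t).
Proof. by move=> h; rewrite /special nth_mkseq. Qed.

Lemma size_special n t : size (special n t) = n.
Proof. exact: size_mkseq. Qed.

Lemma isperm_special n t : 1 <= t <= n -> isperm n (special n t).
Proof.
move=> ht; apply/and3P; split.
- rewrite /special /mkseq map_inj_in_uniq ?iota_uniq // => i j.
  rewrite !mem_iota /= !add0n => hi hj; splitifs; lia.
- by rewrite size_special.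
- apply/allP => x /mapP [i]; rewrite mem_iota add0n => /andP[_ hi] ->; splitifs; lia.
Qed.

Lemma special_sq n t i : 1 <= t -> t + t <= n -> i < n ->
  (special n t)`@((special n t)`@i) =
  if i < t then t.-1 - i else if i < n - t then i else n.-1 - (i - (n - t)).
Proof.
move=> h1 h2 hi; rewrite (special_nth _ hi).
case: (ltnP i (n - t)) => H0 /=.
  rewrite special_nth; last lia. splitifs; lia.
rewrite special_nth; last lia. splitifs; lia.
Qed.

Lemma good_special n t : 1 <= t -> t + t <= n -> good (special n t).
Proof.
move=> h1 h2; split.
- case=> i [j [k [ij jk]]]; rewrite size_special => kn.
  rewrite !special_nth; try lia. splitifs; lia.
- case=> i [j [k [l [ij jk kl]]]]; rewrite size_special => ln.
  rewrite !special_nth; try lia. splitifs; lia.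
- case=> i [j [k [ij jk]]]; rewrite size_sq size_special => kn.
  rewrite !sq_nth ?size_special; try lia.
  rewrite !special_sq; try lia. splitifs; lia.
Qed.

Lemma last_special n t : 1 <= t <= n -> last 0 (special n t) = t.-1.
Proof.
move=> h; rewrite -nth_last size_special special_nth; try lia. splitifs; lia.
Qed.

Definition ext1 n (L : seq (seq nat)) := [seq v ++ [:: n.-1] | v <- L].
Definition ext2 n (L : seq (seq nat)) := [seq v ++ [:: n.-1; n.-2] | v <- L].
Definition specials n := [seq special n t | t <- iota 1 n./2].
Definition nextL n a b := ext1 n b ++ ext2 n a ++ specials n.

Fixpoint Lst2 n : seq (seq nat) * seq (seq nat) :=
  match n with
  | 0 => ([:: [::]], [:: [:: 0]])
  | k.+1 => let: (a, b) := Lst2 k in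
            (b, if k == 0 then [:: [:: 0; 1]; [:: 1; 0]] else nextL k.+2 a b)
  end.
Definition Lst n := (Lst2 n).1.

Lemma Lst2S k : Lst2 k.+1 = ((Lst2 k).2,
   if k == 0 then [:: [:: 0; 1]; [:: 1; 0]] else nextL k.+2 (Lst2 k).1 (Lst2 k).2).
Proof. by rewrite /=; case: (Lst2 k). Qed.

Lemma Lst2_snd k : (Lst2 k).2 = Lst k.+1.
Proof. by rewrite /Lst Lst2S. Qed.

Lemma Lst_rec n : Lst n.+3 = nextL n.+3 (Lst n.+1) (Lst n.+2).
Proof. rewrite -Lst2_snd (Lst2S n.+1); cbn -[Lst2 nextL]. by rewrite Lst2_snd. Qed.

Lemma Lst0 : Lst 0 = [:: [::]]. Proof. by []. Qed.
Lemma Lst1 : Lst 1 = [:: [:: 0]]. Proof. by []. Qed.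
Lemma Lst2E : Lst 2 = [:: [:: 0; 1]; [:: 1; 0]]. Proof. by []. Qed.

Lemma size_Lst n : size (Lst n.+3) = size (Lst n.+2) + size (Lst n.+1) + n.+3./2.
Proof.
by rewrite Lst_rec /nextL !size_cat !size_map size_iota addnA.
Qed.

Lemma Lst_perm n : all (isperm n) (Lst n).
Proof.
elim/ltn_ind: n => -[|[|[|n]]] IH; rewrite ?Lst0 ?Lst1 ?Lst2E //.
rewrite Lst_rec /nextL !all_cat; apply/and3P; split.
- apply/allP => w /mapP [v vL ->]; apply: isperm_cat1.
  exact: (allP (IH n.+2 (ltnSn _)) _ vL).
- apply/allP => w /mapP [v vL ->]; apply: isperm_cat2.
  exact: (allP (IH n.+1 (leqW (ltnSn _))) _ vL).
- apply/allP => w /mapP [t]; rewrite mem_iota => ht ->.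
  apply: isperm_special; lia.
Qed.

Lemma catIs' (s v1 v2 : seq nat) : v1 ++ s = v2 ++ s -> v1 = v2.
Proof.
move=> e; have hs : size v1 = size v2 by move: (congr1 size e); rewrite !size_cat; lia.
by rewrite -(take_size_cat s (erefl (size v1))) e take_size_cat.
Qed.

Lemma Lst_uniq n : uniq (Lst n).
Proof.
elim/ltn_ind: n => -[|[|[|n]]] IH; rewrite ?Lst0 ?Lst1 ?Lst2E //.
rewrite Lst_rec /nextL !cat_uniq; apply/and5P; split.
- rewrite map_inj_uniq; [exact: IH | exact: catIs'].
- apply/hasP => -[w]; rewrite mem_cat => /orP[] /mapP [v vin ->] /mapP [u _].
    by move/(congr1 (last 0)); rewrite !last_cat /=; lia.
  move: vin; rewrite mem_iota => ht /(congr1 (last 0)); rewrite last_cat last_special /=; lia.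
- rewrite map_inj_uniq; [exact: IH | exact: catIs'].
- apply/hasP => -[w] /mapP [t]; rewrite mem_iota => ht -> /mapP [u _].
  move/(congr1 (last 0)); rewrite last_cat last_special /=; lia.
- rewrite map_inj_in_uniq ?iota_uniq // => t1 t2; rewrite !mem_iota => h1 h2.
  move/(congr1 (last 0)); rewrite !last_special; lia.
Qed.


Lemma isperm_size n w : isperm n w -> size w = n.
Proof. by case/and3P=> _ /eqP. Qed.

Lemma isperm_neq n w a b : isperm n w -> a < n -> b < n -> a != b -> w`@a != w`@b.
Proof. move=> pw ha hb; apply: contra => /eqP e; apply/eqP; exact: isperm_inj pw ha hb e. Qed.

Lemma core n w d : isperm n w -> good w -> 1 <= d -> d < n ->
  (forall i, i < d -> w`@i = n.-1 - i) -> w`@d != n.-1 - d ->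
  n.-1 - d < d /\ (forall j, j <= n.-1 - d -> w`@(d + j) = j).
Proof.
move=> pw [n231 n1432 nsq] d1 dn hD hd.
have sz := isperm_size pw.
have lt := isperm_lt pw.
have neq := isperm_neq pw.
have surj := isperm_surj pw.
have N231 : forall i j k, i < j -> j < k -> k < n -> w`@k < w`@i -> w`@i < w`@j -> False.
  by move=> i j k *; apply: n231; apply: (@mk231 _ i j k); rewrite ?sz.
have N1432 : forall i j k l, i < j -> j < k -> k < l -> l < n ->
    w`@i < w`@l -> w`@l < w`@k -> w`@k < w`@j -> False.
  by move=> i j k l *; apply: n1432; apply: (@mk1432 _ i j k l); rewrite ?sz.
have NSQ : forall i j k, i < j -> j < k -> k < n ->
    w`@(w`@k) < w`@(w`@i) -> w`@(w`@i) < w`@(w`@j) -> False.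
  by move=> i j k *; apply: nsq; apply: (@mksq231 _ i j k); rewrite ?sz.
have big : forall k, d <= k -> k < n -> w`@k <= n.-1 - d.
  move=> k h1 h2; rewrite leqNgt; apply/negP => h3.
  have hi : n.-1 - w`@k < d by have := lt k h2; lia.
  have := hD _ hi; have := lt k h2 => h4.
  have -> : n.-1 - (n.-1 - w`@k) = w`@k by lia.
  move/(isperm_inj pw); have : n.-1 - w`@k < n by lia.
  move=> h5 /(_ h5 h2); lia.
have [q qn wq] := surj (n.-1 - d) ltac:(lia).
have qd : d < q.
  case: (ltngtP q d) => // [h|h]; last by move: hd; rewrite -h wq; lia.
  by move: (hD _ h); rewrite wq; lia.
case: (ltnP (n.-1 - d) d) => md.
-
  have A : forall j', q < j' -> j' < n -> False.
    move=> j' h1 h2.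
    have hdq := neq d q dn qn ltac:(lia); have hjq := neq j' q h2 qn ltac:(lia).
    have hdj := neq d j' dn h2 ltac:(lia).
    have bd := big d (leqnn d) dn; have bj := big j' ltac:(lia) h2.
    rewrite wq in hdq hjq.
    case: (ltngtP (w`@d) (w`@j')) => c.
    + have e1 : w`@(n.-1 - j') = j' by rewrite hD; lia.
      have e2 : w`@(n.-1 - q) = q by rewrite hD; lia.
      have e3 : w`@(n.-1 - d) = d by rewrite hD; lia.
      apply: (NSQ (n.-1 - j') (n.-1 - q) (n.-1 - d)); rewrite ?e1 ?e2 ?e3 ?wq; lia.
    + apply: (N231 d q j'); lia.
    + by move: hdj; rewrite c eqxx.
  have qn1 : q = n.-1.
    case: (ltnP q n.-1) => h; last lia.
    by case: (A n.-1 h); lia.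
  have B : forall j j', d <= j -> j < j' -> j' < q -> w`@j < w`@j'.
    move=> j j' h1 h2 h3; rewrite ltnNge leq_eqVlt negb_or; apply/andP; split.
      by rewrite eq_sym; apply: neq; lia.
    apply/negP => c.
    have hjq := neq j q ltac:(lia) qn ltac:(lia); rewrite wq in hjq.
    have bj := big j h1 ltac:(lia); have bj' := big j' ltac:(lia) ltac:(lia).
    have ej := hD (w`@j) ltac:(lia); have ej' := hD (w`@j') ltac:(lia).
    have eq := hD (n.-1 - d) md.
    apply: (NSQ j j' q); rewrite ?ej ?ej' ?wq ?eq; lia.
  have inc : forall j j', d <= j -> j < j' -> j' < n -> w`@j < w`@j'.
    move=> j j' h1 h2 h3.
    case: (ltnP j' q) => h4; first exact: B.
    have hjq := neq j q ltac:(lia) qn ltac:(lia); rewrite wq in hjq.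
    have bj := big j h1 ltac:(lia).
    have -> : j' = q by lia.
    rewrite wq; lia.
  have low : forall j, d + j < n -> j <= w`@(d + j).
    elim=> [|j IH] h //.
    have := inc (d + j) (d + j.+1) ltac:(lia) ltac:(lia) h.
    have := IH ltac:(lia). lia.
  have up : forall j, j <= n.-1 - d -> w`@(n.-1 - j) <= n.-1 - d - j.
    elim=> [|j IH] h.
      by rewrite !subn0; apply: big; lia.
    have := inc (n.-1 - j.+1) (n.-1 - j) ltac:(lia) ltac:(lia) ltac:(lia).
    have := IH ltac:(lia). lia.
  split=> // j hj.
  have := low j ltac:(lia); have := up (n.-1 - d - j) ltac:(lia).
  have -> : n.-1 - (n.-1 - d - j) = d + j by lia.
  lia.
-
  exfalso.
  have [p0 p0n wp0] := surj 0 ltac:(lia).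
  have p0d : d <= p0.
    case: (ltnP p0 d) => // h; move: (hD _ h); rewrite wp0; lia.
  have sq0 : w`@(w`@0) = w`@(n.-1) by rewrite (hD 0) // subn0.
  have sqp0 : w`@(w`@p0) = n.-1 by rewrite wp0 (hD 0) // subn0.
  case: (ltnP q n.-1) => hq.
  + have I : forall i k, d <= i -> i < q -> q < k -> k < n -> w`@i < w`@k.
      move=> i k h1 h2 h3 h4; rewrite ltnNge leq_eqVlt negb_or; apply/andP; split.
        by rewrite eq_sym; apply: neq; lia.
      apply/negP => c.
      have hiq := neq i q ltac:(lia) qn ltac:(lia); rewrite wq in hiq.
      have bi := big i h1 ltac:(lia).
      apply: (N231 i q k); lia.
    have [r rn wr] := surj (n.-1 - d).-1 ltac:(lia).
    have rd : d <= r.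
      case: (ltnP r d) => // h; move: (hD _ h); rewrite wr; lia.
    have hn1q := neq n.-1 q ltac:(lia) qn ltac:(lia); rewrite wq in hn1q.
    have bn1 := big n.-1 ltac:(lia) ltac:(lia).
    have wl : w`@(n.-1) = (n.-1 - d).-1.
      case: (ltngtP r q) => h.
      * have := I r n.-1 rd h hq ltac:(lia); rewrite wr; lia.
      * case: (ltnP r n.-1) => h'; last first.
          have e : r = n.-1 by lia.
          by move: wr; rewrite e.
        have hn1r := neq n.-1 r ltac:(lia) rn ltac:(lia); rewrite wr in hn1r.
        have := I d n.-1 (leqnn d) qd hq ltac:(lia) => h''.
        exfalso; apply: (N1432 d q r n.-1); rewrite ?wq ?wr; lia.
      * by move: wr; rewrite h wq; lia.
    have p0q : p0 < q.
      case: (ltngtP p0 q) => // h; first by have := I d p0 (leqnn d) qd h p0n; rewrite wp0.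
      by move: wq; rewrite -h wp0; lia.
    case: (eqVneq (n.-1 - d) q) => hmq.
    * have hm1q := neq (n.-1 - d).-1 q ltac:(lia) qn ltac:(lia); rewrite wq in hm1q.
      have hm1n := neq (n.-1 - d).-1 n.-1 ltac:(lia) ltac:(lia) ltac:(lia); rewrite wl in hm1n.
      have bm1 := big (n.-1 - d).-1 ltac:(lia) ltac:(lia).
      apply: (NSQ 0 p0 n.-1); rewrite ?sq0 ?sqp0 ?wl; lia.
    * have hmq' := neq (n.-1 - d) q ltac:(lia) qn hmq; rewrite wq in hmq'.
      have hmn := neq (n.-1 - d) n.-1 ltac:(lia) ltac:(lia) ltac:(lia); rewrite wl in hmn.
      have bm := big (n.-1 - d) ltac:(lia) ltac:(lia).
      apply: (NSQ 0 p0 q); rewrite ?sq0 ?sqp0 ?wl ?wq; lia.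
  + have qe : q = n.-1 by lia.
    have wl : w`@(n.-1) = n.-1 - d by rewrite -{1}qe.
    have hmq := neq (n.-1 - d) q ltac:(lia) qn ltac:(lia); rewrite wq in hmq.
    have bm := big (n.-1 - d) ltac:(lia) ltac:(lia).
    have p0n1 : p0 != n.-1 by apply/eqP => e; move: wl; rewrite -e wp0; lia.
    apply: (NSQ 0 p0 n.-1); rewrite ?sq0 ?sqp0 ?wl; lia.
Qed.


Lemma take_last1 (w : seq nat) k : size w = k.+1 -> w = take k w ++ [:: w`@k].
Proof. by move=> h; rewrite cats1 -take_nth ?h // take_oversize ?h. Qed.

Lemma take_last2 (w : seq nat) k : size w = k.+2 -> w = take k w ++ [:: w`@k; w`@k.+1].
Proof.
move=> h; rewrite -{1}(take_oversize (n:=k.+2) (s:=w)) ?h //.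
rewrite (take_nth 0) ?h // (take_nth 0) ?h //.
by rewrite -!cats1 -catA.
Qed.

Lemma isperm_take n w k : isperm n w -> k <= n -> (forall i, i < k -> w`@i < k) ->
  isperm k (take k w).
Proof.
move=> pw kn hk; have sz := isperm_size pw; apply/and3P; split.
- by apply: take_uniq; case/and3P: pw.
- by rewrite size_takel ?sz.
- apply/allP => x xin.
  have hi : index x (take k w) < k.
    by move: xin; rewrite -index_mem size_takel ?sz.
  rewrite -(nth_index 0 xin) nth_take //; exact: hk.
Qed.

Lemma main_dir n w : 3 <= n -> isperm n w -> good w ->
  (forall m v, m < n -> isperm m v -> good v -> v \in Lst m) -> w \in Lst n.
Proof.
case: n => [|[|[|n]]] // _ pw gw IH.
have gw' := gw; case: gw' => n231 n1432 nsq.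
have sz := isperm_size pw.
have lt := isperm_lt pw.
have neq := isperm_neq pw.
have surj := isperm_surj pw.
have N231 : forall i j k, i < j -> j < k -> k < n.+3 -> w`@k < w`@i -> w`@i < w`@j -> False.
  by move=> i j k *; apply: n231; apply: (@mk231 _ i j k); rewrite ?sz.
have N1432 : forall i j k l, i < j -> j < k -> k < l -> l < n.+3 ->
    w`@i < w`@l -> w`@l < w`@k -> w`@k < w`@j -> False.
  by move=> i j k l *; apply: n1432; apply: (@mk1432 _ i j k l); rewrite ?sz.
have NSQ : forall i j k, i < j -> j < k -> k < n.+3 ->
    w`@(w`@k) < w`@(w`@i) -> w`@(w`@i) < w`@(w`@j) -> False.
  by move=> i j k *; apply: nsq; apply: (@mksq231 _ i j k); rewrite ?sz.
rewrite Lst_rec /nextL !mem_cat.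
have [Q Qn wQ] := surj n.+2 ltac:(lia).
case: (posnP Q) => hQ.
- (* w_0 = n-1 : specials *)
  apply/orP; right; apply/orP; right.
  have w0 : w`@0 = n.+2 by move: wQ; rewrite hQ.
  case: (pickP [pred i : 'I_n.+3 | w`@i != n.+2 - i]) => [i0 hi0 | hnone].
  + have exP : exists i, (i < n.+3) && (w`@i != n.+2 - i) by exists i0; rewrite ltn_ord.
    case: (ex_minnP exP) => d /andP[dn hd] dmin.
    have d1 : 1 <= d.
      case: (posnP d) => // e; move: hd; rewrite e w0; lia.
    have hD : forall i, i < d -> w`@i = n.+3.-1 - i.
      move=> i hi; have hi2 := hi; apply/eqP; apply: contraTT hi => c; rewrite -leqNgt; apply: dmin.
      by apply/andP; split; [lia | exact: c].
    have [md hv] := core pw gw d1 dn hD hd.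
    apply/mapP; exists (n.+3 - d); first by rewrite mem_iota; lia.
    apply: (@eq_from_nth _ 0); first by rewrite sz size_special.
    move=> i; rewrite sz => hi; rewrite special_nth //.
    case: (ltnP i (n.+3 - (n.+3 - d))) => h.
      rewrite hD; lia.
    have -> : i = d + (i - d) by lia.
    rewrite hv; lia.
  + apply/mapP; exists 1; first by rewrite mem_iota; lia.
    apply: (@eq_from_nth _ 0); first by rewrite sz size_special.
    move=> i; rewrite sz => hi; rewrite special_nth //.
    have := hnone (Ordinal hi); rewrite /= => /negbFE /eqP ->.
    case: ltnP => h; lia.
- have I : forall i k, i < Q -> Q < k -> k < n.+3 -> w`@i < w`@k.
    move=> i k h1 h2 h3; rewrite ltnNge leq_eqVlt negb_or; apply/andP; split.
      by rewrite eq_sym; apply: neq; lia.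
    apply/negP => c.
    have hiQ := neq i Q ltac:(lia) Qn ltac:(lia); rewrite wQ in hiQ.
    have := lt i ltac:(lia).
    move=> hin; apply: (N231 i Q k); lia.
  case: (ltngtP Q n.+2) => hQn; last first.
  +
    have wl : w`@n.+2 = n.+2 by rewrite -{1}hQn.
    have ew : w = take n.+2 w ++ [:: n.+2].
      by have := take_last1 (w:=w) (k:=n.+2) sz; rewrite wl.
    apply/orP; left; apply/mapP; exists (take n.+2 w).
      apply: IH; first lia.
        apply: isperm_take pw _ _ => // i hi.
        have := lt i ltac:(lia); have := neq i Q ltac:(lia) Qn ltac:(lia).
        rewrite wQ; lia.
      apply/(good_cat1 (m := n.+2)).
        apply: isperm_take pw _ _ => // i hi.
        have := lt i ltac:(lia); have := neq i Q ltac:(lia) Qn ltac:(lia).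
        rewrite wQ; lia.
      by rewrite -ew.
    by rewrite /= -ew.
  + lia.
  + case: (ltngtP Q n.+1) => hQn'; last first.
    *
      have [r rn wr] := surj n.+1 ltac:(lia).
      have wl : w`@n.+2 = n.+1.
        case: (ltngtP r Q) => h.
        - have := I r n.+2 h ltac:(lia) ltac:(lia); rewrite wr.
          have := lt n.+2 ltac:(lia); have := neq n.+2 Q ltac:(lia) Qn ltac:(lia).
          rewrite wQ; lia.
        - have e : r = n.+2 by lia.
          by move: wr; rewrite e.
        - by move: wr; rewrite h wQ; lia.
      have hv : forall i, i < n.+1 -> w`@i < n.+1.
        move=> i hi; have := lt i ltac:(lia).
        have := neq i Q ltac:(lia) Qn ltac:(lia).
        have := neq i n.+2 ltac:(lia) ltac:(lia) ltac:(lia).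
        rewrite wQ wl; lia.
      have ew : w = take n.+1 w ++ [:: n.+2; n.+1].
        have wq : w`@n.+1 = n.+2 by rewrite -{1}hQn'.
        by have := take_last2 (w:=w) (k:=n.+1) sz; rewrite wl wq.
      apply/orP; right; apply/orP; left; apply/mapP; exists (take n.+1 w) => //.
      apply: IH; first lia.
        by apply: (isperm_take pw _ hv); lia.
      apply/(good_cat2 (m := n.+1)); first by apply: (isperm_take pw _ hv); lia.
      by rewrite -ew.
    * lia.
    * exfalso.
      have J : forall k l, Q < k -> k < l -> l < n.+3 -> w`@k < w`@l.
        move=> k l h1 h2 h3; rewrite ltnNge leq_eqVlt negb_or; apply/andP; split.
          by rewrite eq_sym; apply: neq; lia.
        apply/negP => c.
        have hkQ := neq k Q ltac:(lia) Qn ltac:(lia); rewrite wQ in hkQ.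
        have := lt k ltac:(lia); have := I 0 l hQ ltac:(lia) h3.
        move=> h4 h5; apply: (N1432 0 Q k l); lia.
      have [r rn wr] := surj n.+1 ltac:(lia).
      have wl : w`@n.+2 = n.+1.
        have hn2Q := neq n.+2 Q ltac:(lia) Qn ltac:(lia); rewrite wQ in hn2Q.
        have := lt n.+2 ltac:(lia) => hl.
        case: (ltngtP r Q) => h.
        - by have := I r n.+2 h ltac:(lia) ltac:(lia); rewrite wr; lia.
        - case: (ltnP r n.+2) => h'.
            by have := J r n.+2 h h' ltac:(lia); rewrite wr; lia.
          have e : r = n.+2 by lia.
          by move: wr; rewrite e.
        - by move: wr; rewrite h wQ; lia.
      have [s sn ws] := surj Q ltac:(lia).
      case: (ltngtP s Q) => h.
      - have low : forall j, Q.+1 + j < n.+3 -> Q.+1 + j <= w`@(Q.+1 + j).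
          elim=> [|j IHj] hj.
            have := I s Q.+1 h ltac:(lia) ltac:(lia); rewrite ws addn0; lia.
          have := J (Q.+1 + j) (Q.+1 + j.+1) ltac:(lia) ltac:(lia) hj.
          have := IHj ltac:(lia); lia.
        have := low (n.+2 - Q.+1) ltac:(lia).
        have -> : Q.+1 + (n.+2 - Q.+1) = n.+2 by lia.
        rewrite wl; lia.
      - have hsn : s != n.+2 by apply/eqP => e; move: ws; rewrite e wl; lia.
        have hn1 := neq n.+1 Q ltac:(lia) Qn ltac:(lia); rewrite wQ in hn1.
        have hn1' := neq n.+1 n.+2 ltac:(lia) ltac:(lia) ltac:(lia); rewrite wl in hn1'.
        have := lt n.+1 ltac:(lia) => hl.
        apply: (NSQ Q s n.+2); rewrite ?wQ ?ws ?wl; lia.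
      - by move: ws; rewrite h wQ; lia.

Qed.


Lemma small_good w : size w <= 2 -> good w.
Proof.
move=> h; split.
- by case=> i [j [k [ij jk kn _]]]; lia.
- by case=> i [j [k [l [ij jk kl ln _]]]]; lia.
- by case=> i [j [k [ij jk]]]; rewrite size_sq => kn _; lia.
Qed.

Lemma key n w : isperm n w -> (good w <-> w \in Lst n).
Proof.
elim/ltn_ind: n w => n IH w pw.
case: n IH pw => [|[|[|n]]] IH pw.
- have sz := isperm_size pw; case: w pw sz => [|a w] pw sz //.
  split=> // _; exact: small_good.
- have sz := isperm_size pw; case: w pw sz => [|a [|b w]] pw sz //.
  have := isperm_lt pw (ltn0Sn 0) => /= ha.
  have -> : a = 0 by lia.
  split=> // _; exact: small_good.
- have sz := isperm_size pw; case: w pw sz => [|a [|b [|c w]]] pw sz //.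
  have := isperm_lt pw (ltn0Sn 1) => /= ha.
  have := isperm_lt pw (ltnSn 1) => /= hb.
  have := isperm_neq pw (ltn0Sn 1) (ltnSn 1) isT => /= hab.
  split=> _; last exact: small_good.
  rewrite Lst2E !inE.
  by have [[-> ->]|[-> ->]] : (a = 0 /\ b = 1) \/ (a = 1 /\ b = 0) by lia.
- split.
    move=> gw; apply: main_dir => // m v hm pv gv.
    by apply/(IH m hm v pv).
  rewrite Lst_rec /nextL !mem_cat => /or3P[] /mapP.
  + case=> v vL ->.
    have pv : isperm n.+2 v := allP (Lst_perm n.+2) _ vL.
    apply/(good_cat1 pv); exact/(IH n.+2 ltac:(lia) v pv).
  + case=> v vL ->.
    have pv : isperm n.+1 v := allP (Lst_perm n.+1) _ vL.
    apply/(good_cat2 pv); exact/(IH n.+1 ltac:(lia) v pv).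
  + case=> t; rewrite mem_iota => ht ->.
    apply: good_special; lia.
Qed.


Definition sp n (pi : 'S_n.+1) : seq nat := mkseq (fun i => val (pi (inord i))) n.+1.

Lemma sp_nth n (pi : 'S_n.+1) i : i < n.+1 -> (sp pi)`@i = pi (inord i).
Proof. by move=> h; rewrite /sp nth_mkseq. Qed.

Lemma size_sp n (pi : 'S_n.+1) : size (sp pi) = n.+1.
Proof. exact: size_mkseq. Qed.

Lemma sp_nth_ord n (pi : 'S_n.+1) (i : 'I_n.+1) : (sp pi)`@i = pi i.
Proof. by rewrite sp_nth // inord_val. Qed.

Lemma isperm_sp n (pi : 'S_n.+1) : isperm n.+1 (sp pi).
Proof.
apply/and3P; split.
- rewrite /sp /mkseq map_inj_in_uniq ?iota_uniq // => i j.
  rewrite !mem_iota /= !add0n => hi hj /val_inj /perm_inj /(congr1 (@nat_of_ord _)).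
  by rewrite !inordK.
- by rewrite size_sp.
- by apply/allP => x /mapP [i _ ->]; exact: ltn_ord.
Qed.

Lemma sp_inj n : injective (@sp n).
Proof.
move=> p1 p2 e; apply/permP => i; apply: val_inj.
have h1 := sp_nth_ord p1 i; have h2 := sp_nth_ord p2 i; rewrite e in h1.
exact: etrans (esym h1) h2.
Qed.

Lemma sp_surj n w : isperm n.+1 w -> exists pi : 'S_n.+1, sp pi = w.
Proof.
move=> pw.
have finj : injective (fun i : 'I_n.+1 => (inord (w`@i) : 'I_n.+1)).
  move=> i j /(congr1 (@nat_of_ord _)); rewrite !inordK ?(isperm_lt pw) //.
  by move/(isperm_inj pw (ltn_ord i) (ltn_ord j)) => /val_inj.
exists (perm finj); apply: (@eq_from_nth _ 0); first by rewrite size_sp (isperm_size pw).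
move=> i; rewrite size_sp => hi; rewrite sp_nth // permE /= inordK ?inordK //.
exact: isperm_lt pw _.
Qed.

Lemma sq_sp n (pi : 'S_n.+1) : sq (sp pi) = sp (pi * pi)%g.
Proof.
apply: (@eq_from_nth _ 0); first by rewrite size_sq !size_sp.
move=> i; rewrite size_sq size_sp => hi.
rewrite sq_nth ?size_sp // !sp_nth // permM.
by rewrite inord_val.
Qed.

Lemma card_sp n (L : seq (seq nat)) : uniq L -> all (isperm n.+1) L ->
  #|[set pi : 'S_n.+1 | sp pi \in L]| = size L.
Proof.
move=> uL aL.
rewrite cardE -(size_map (@sp n)); apply: perm_size.
apply: uniq_perm => //.
  by rewrite map_inj_uniq ?enum_uniq //; exact: sp_inj.
move=> w; apply/mapP/idP.
  by case=> pi; rewrite mem_enum inE => h ->.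
move=> wL; have [pi epi] := sp_surj (allP aL _ wL).
by exists pi; rewrite ?mem_enum ?inE epi.
Qed.


Lemma perm_val_neq m (pi : 'S_m) (a b : 'I_m) : val a != val b -> val (pi a) != val (pi b).
Proof. by apply: contra => /eqP /val_inj /perm_inj ->. Qed.

Ltac fin := rewrite ?eqbF_neg ?eqb_id -?leqNgt; lia.

Lemma contains231 n (pi : 'S_n.+1) : contains pi [:: 2; 3; 1] <-> c231 (sp pi).
Proof.
split.
- case/existsP => f /forallP H.
  pose o0 := @Ordinal 3 0 isT; pose o1 := @Ordinal 3 1 isT; pose o2 := @Ordinal 3 2 isT.
  have := H o0 => /forallP /(_ o1) /implyP /(_ isT) /andP [f01 /eqP e01].
  have := H o0 => /forallP /(_ o2) /implyP /(_ isT) /andP [f02 /eqP e02].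
  have := H o1 => /forallP /(_ o2) /implyP /(_ isT) /andP [f12 /eqP e12].
  have ne : nat_of_ord (pi (f o0)) != nat_of_ord (pi (f o1)).
    by apply: perm_val_neq; rewrite neq_ltn f01.
  have {}e01 : (pi (f o1) < pi (f o0)) = false by rewrite e01.
  have {}e02 : (pi (f o2) < pi (f o0)) = true by rewrite e02.
  apply: (@mk231 _ (f o0) (f o1) (f o2)); rewrite ?size_sp ?sp_nth_ord //; fin.
- case=> i [j [k [ij jk]]]; rewrite size_sp => kn /andP [h1 h2].
  apply/existsP.
  exists [ffun s : 'I_3 => (inord (nth 0 [:: i; j; k] s) : 'I_n.+1)].
  apply/forallP => s; apply/forallP => t; apply/implyP => st; rewrite !ffunE.
  move: h1 h2; rewrite !sp_nth; try lia.
  case: s st => [[|[|[|s]]] hs] //=; case: t => [[|[|[|t]]] ht] //= _;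
    rewrite ?inordK; try lia; move=> h1 h2; apply/andP; split; try lia; fin.
Qed.

Lemma contains1432 n (pi : 'S_n.+1) : contains pi [:: 1; 4; 3; 2] <-> c1432 (sp pi).
Proof.
split.
- case/existsP => f /forallP H.
  pose o0 := @Ordinal 4 0 isT; pose o1 := @Ordinal 4 1 isT; pose o2 := @Ordinal 4 2 isT.
  pose o3 := @Ordinal 4 3 isT.
  have := H o0 => /forallP /(_ o1) /implyP /(_ isT) /andP [f01 _].
  have := H o0 => /forallP /(_ o3) /implyP /(_ isT) /andP [f03 /eqP e03].
  have := H o1 => /forallP /(_ o2) /implyP /(_ isT) /andP [f12 /eqP e12].
  have := H o2 => /forallP /(_ o3) /implyP /(_ isT) /andP [f23 /eqP e23].
  have ne : nat_of_ord (pi (f o0)) != nat_of_ord (pi (f o3)).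
    by apply: perm_val_neq; rewrite neq_ltn f03.
  have {}e03 : (pi (f o3) < pi (f o0)) = false by rewrite e03.
  have {}e12 : (pi (f o2) < pi (f o1)) = true by rewrite e12.
  have {}e23 : (pi (f o3) < pi (f o2)) = true by rewrite e23.
  apply: (@mk1432 _ (f o0) (f o1) (f o2) (f o3)); rewrite ?size_sp ?sp_nth_ord //; fin.
- case=> i [j [k [l [ij jk kl]]]]; rewrite size_sp => ln [/andP [h1 h2] h3].
  apply/existsP.
  exists [ffun s : 'I_4 => (inord (nth 0 [:: i; j; k; l] s) : 'I_n.+1)].
  apply/forallP => s; apply/forallP => t; apply/implyP => st; rewrite !ffunE.
  move: h1 h2 h3; rewrite !sp_nth; try lia.
  case: s st => [[|[|[|[|s]]]] hs] //=; case: t => [[|[|[|[|t]]]] ht] //= _;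
    rewrite ?inordK; try lia; move=> h1 h2 h3; apply/andP; split; try lia; fin.
Qed.

Definition c312 (w : seq nat) : Prop :=
  exists i j k, [/\ i < j, j < k, k < size w & w`@j < w`@k < w`@i].
Definition c3214 (w : seq nat) : Prop :=
  exists i j k l, [/\ i < j, j < k, k < l, l < size w & w`@k < w`@j < w`@i /\ w`@i < w`@l].

Lemma contains312 n (pi : 'S_n.+1) : contains pi [:: 3; 1; 2] <-> c312 (sp pi).
Proof.
split.
- case/existsP => f /forallP H.
  pose o0 := @Ordinal 3 0 isT; pose o1 := @Ordinal 3 1 isT; pose o2 := @Ordinal 3 2 isT.
  have := H o0 => /forallP /(_ o1) /implyP /(_ isT) /andP [f01 _].
  have := H o0 => /forallP /(_ o2) /implyP /(_ isT) /andP [f02 /eqP e02].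
  have := H o1 => /forallP /(_ o2) /implyP /(_ isT) /andP [f12 /eqP e12].
  have ne : nat_of_ord (pi (f o1)) != nat_of_ord (pi (f o2)).
    by apply: perm_val_neq; rewrite neq_ltn f12.
  have {}e12 : (pi (f o2) < pi (f o1)) = false by rewrite e12.
  have {}e02 : (pi (f o2) < pi (f o0)) = true by rewrite e02.
  exists (f o0), (f o1), (f o2); rewrite ?size_sp ?sp_nth_ord; split=> //; apply/andP; split; fin.
- case=> i [j [k [ij jk]]]; rewrite size_sp => kn /andP [h1 h2].
  apply/existsP.
  exists [ffun s : 'I_3 => (inord (nth 0 [:: i; j; k] s) : 'I_n.+1)].
  apply/forallP => s; apply/forallP => t; apply/implyP => st; rewrite !ffunE.
  move: h1 h2; rewrite !sp_nth; try lia.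
  case: s st => [[|[|[|s]]] hs] //=; case: t => [[|[|[|t]]] ht] //= _;
    rewrite ?inordK; try lia; move=> h1 h2; apply/andP; split; try lia; fin.
Qed.

Lemma contains3214 n (pi : 'S_n.+1) : contains pi [:: 3; 2; 1; 4] <-> c3214 (sp pi).
Proof.
split.
- case/existsP => f /forallP H.
  pose o0 := @Ordinal 4 0 isT; pose o1 := @Ordinal 4 1 isT; pose o2 := @Ordinal 4 2 isT.
  pose o3 := @Ordinal 4 3 isT.
  have := H o0 => /forallP /(_ o1) /implyP /(_ isT) /andP [f01 /eqP e01].
  have := H o0 => /forallP /(_ o3) /implyP /(_ isT) /andP [f03 /eqP e03].
  have := H o1 => /forallP /(_ o2) /implyP /(_ isT) /andP [f12 /eqP e12].
  have := H o2 => /forallP /(_ o3) /implyP /(_ isT) /andP [f23 _].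
  have ne : nat_of_ord (pi (f o0)) != nat_of_ord (pi (f o3)).
    by apply: perm_val_neq; rewrite neq_ltn f03.
  have {}e03 : (pi (f o3) < pi (f o0)) = false by rewrite e03.
  have {}e12 : (pi (f o2) < pi (f o1)) = true by rewrite e12.
  have {}e01 : (pi (f o1) < pi (f o0)) = true by rewrite e01.
  exists (f o0), (f o1), (f o2), (f o3); rewrite ?size_sp ?sp_nth_ord; split=> //.
  split; [apply/andP; split|]; fin.
- case=> i [j [k [l [ij jk kl]]]]; rewrite size_sp => ln [/andP [h1 h2] h3].
  apply/existsP.
  exists [ffun s : 'I_4 => (inord (nth 0 [:: i; j; k; l] s) : 'I_n.+1)].
  apply/forallP => s; apply/forallP => t; apply/implyP => st; rewrite !ffunE.
  move: h1 h2 h3; rewrite !sp_nth; try lia.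
  case: s st => [[|[|[|[|s]]]] hs] //=; case: t => [[|[|[|[|t]]]] ht] //= _;
    rewrite ?inordK; try lia; move=> h1 h2 h3; apply/andP; split; try lia; fin.
Qed.


Definition rc n (w : seq nat) := rev (map (fun x => n.-1 - x) w).

Lemma size_rc n w : size (rc n w) = size w.
Proof. by rewrite size_rev size_map. Qed.

Lemma rc_nth n w i : size w = n -> i < n -> (rc n w)`@i = n.-1 - w`@(n.-1 - i).
Proof.
move=> sz hi; rewrite nth_rev ?size_map ?sz // (nth_map 0) ?sz; last lia.
by have -> : n - i.+1 = n.-1 - i by lia.
Qed.

Lemma rc_nth' n w i : size w = n -> i < n -> (rc n w)`@(n.-1 - i) = n.-1 - w`@i.
Proof.
move=> sz hi; rewrite rc_nth //; last lia.
by have -> : n.-1 - (n.-1 - i) = i by lia.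
Qed.

Lemma c312_rc n w : size w = n -> (forall x, x \in w -> x < n) -> (c312 w <-> c231 (rc n w)).
Proof.
move=> sz hw; have hl : forall i, i < n -> w`@i < n.
  by move=> i hi; apply: hw; apply: mem_nth; rewrite sz.
split.
- case=> i [j [k [ij jk]]]; rewrite sz => kn /andP[h1 h2].
  have := hl i ltac:(lia); have := hl j ltac:(lia); have := hl k ltac:(lia) => *.
  apply: (@mk231 _ (n.-1 - k) (n.-1 - j) (n.-1 - i)); rewrite ?size_rc ?sz ?rc_nth' //; lia.
- case=> i [j [k [ij jk]]]; rewrite size_rc sz => kn /andP[].
  rewrite !rc_nth //; try lia. move=> h1 h2.
  have := hl (n.-1 - i) ltac:(lia); have := hl (n.-1 - j) ltac:(lia).
  have := hl (n.-1 - k) ltac:(lia) => *.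
  exists (n.-1 - k), (n.-1 - j), (n.-1 - i); rewrite sz; split; lia.
Qed.

Lemma c3214_rc n w : size w = n -> (forall x, x \in w -> x < n) -> (c3214 w <-> c1432 (rc n w)).
Proof.
move=> sz hw; have hl : forall i, i < n -> w`@i < n.
  by move=> i hi; apply: hw; apply: mem_nth; rewrite sz.
split.
- case=> i [j [k [l [ij jk kl]]]]; rewrite sz => ln [/andP[h1 h2] h3].
  have := hl i ltac:(lia); have := hl j ltac:(lia); have := hl k ltac:(lia);
  have := hl l ltac:(lia) => *.
  apply: (@mk1432 _ (n.-1 - l) (n.-1 - k) (n.-1 - j) (n.-1 - i)); rewrite ?size_rc ?sz ?rc_nth' //; lia.
- case=> i [j [k [l [ij jk kl]]]]; rewrite size_rc sz => ln [/andP[]].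
  rewrite !rc_nth //; try lia. move=> h1 h2 h3.
  have := hl (n.-1 - i) ltac:(lia); have := hl (n.-1 - j) ltac:(lia).
  have := hl (n.-1 - k) ltac:(lia); have := hl (n.-1 - l) ltac:(lia) => *.
  exists (n.-1 - l), (n.-1 - k), (n.-1 - j), (n.-1 - i); rewrite sz; split; lia.
Qed.

Lemma isperm_rc n w : isperm n w -> isperm n (rc n w).
Proof.
move=> pw; have sz := isperm_size pw; apply/and3P; split.
- rewrite rev_uniq map_inj_in_uniq; first by case/and3P: pw.
  move=> x y /(isperm_all pw) hx /(isperm_all pw) hy; lia.
- by rewrite size_rc sz.
- apply/allP => x; rewrite mem_rev => /mapP [y /(isperm_all pw) hy ->]; lia.
Qed.

Lemma rc_rc n w : isperm n w -> rc n (rc n w) = w.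
Proof.
move=> pw; rewrite /rc map_rev revK -map_comp map_id_in // => x /(isperm_all pw) hx /=; lia.
Qed.

Lemma sq_rc n w : isperm n w -> sq (rc n w) = rc n (sq w).
Proof.
move=> pw; have sz := isperm_size pw.
apply: (@eq_from_nth _ 0); first by rewrite size_sq !size_rc size_sq.
move=> i; rewrite size_sq size_rc sz => hi.
rewrite sq_nth ?size_rc ?sz // !rc_nth ?size_sq ?sz //; try lia.
  rewrite sq_nth ?sz; last lia.
  have := isperm_lt (i := n.-1 - i) pw ltac:(lia) => h.
  by have -> : n.-1 - (n.-1 - w`@(n.-1 - i)) = w`@(n.-1 - i) by lia.
Qed.

Definition good2 w := [/\ ~ c312 w, ~ c3214 w & ~ c312 (sq w)].

Lemma good2_rc n w : isperm n w -> (good2 w <-> good (rc n w)).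
Proof.
move=> pw; have sz := isperm_size pw.
have e1 := c312_rc sz (fun x => isperm_all pw (x:=x)).
have e2 := c3214_rc sz (fun x => isperm_all pw (x:=x)).
have e3 := c312_rc (etrans (size_sq w) sz) (fun x => sq_all pw (x:=x)).
rewrite /good2 /good sq_rc //.
split=> -[g1 g2 g3]; split.
- by move/e1. - by move/e2. - by move/e3.
- by move/e1. - by move/e2. - by move/e3.
Qed.

Lemma lucas_Lst n : size (Lst n.+1) + uphalf n.+1 + 1 = lucas n.+2.
Proof.
elim/ltn_ind: n => -[|[|n]] IH //.
have h1 := IH n.+1 ltac:(lia); have h0 := IH n ltac:(lia).
rewrite size_Lst.
have -> : lucas n.+4 = lucas n.+3 + lucas n.+2 by [].
lia.
Qed.

Theorem theorem4p1 (n : nat) : 1 <= n ->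
  cn n [:: 2; 3; 1] [:: 1; 4; 3; 2] [:: 2; 3; 1] = lucas n.+1 - uphalf n - 1 /\
  cn n [:: 3; 1; 2] [:: 3; 2; 1; 4] [:: 3; 1; 2] = lucas n.+1 - uphalf n - 1.
Proof.
case: n => [//|n] _.
have hs : lucas n.+2 - uphalf n.+1 - 1 = size (Lst n.+1) by have := lucas_Lst n; lia.
rewrite hs; split.
- rewrite /cn -(card_sp (Lst_uniq _) (Lst_perm _)); apply: eq_card => pi; rewrite !inE.
  have pw := isperm_sp pi.
  apply/idP/idP.
  + case/and3P => a1 a2 a3; apply/(key pw); split.
    * by move/contains231 => h; move/negP: a1; apply.
    * by move/contains1432 => h; move/negP: a2; apply.
    * by rewrite sq_sp => /contains231 h; move/negP: a3; apply.
  + move/(key pw) => [g1 g2 g3]; apply/and3P; split; apply/negP.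
    * by move/contains231.
    * by move/contains1432.
    * by move/contains231; rewrite -sq_sp.
- rewrite /cn -(size_map (rc n.+1)) -(@card_sp n (map (rc n.+1) (Lst n.+1))); last first.
  + by apply/allP => w /mapP [u /(allP (Lst_perm _)) pu ->]; exact: isperm_rc.
  + rewrite map_inj_in_uniq ?Lst_uniq // => u v /(allP (Lst_perm _)) pu /(allP (Lst_perm _)) pv e.
    by rewrite -(rc_rc pu) e rc_rc.
  apply: eq_card => pi; rewrite !inE.
  have pw := isperm_sp pi.
  have e : (sp pi \in map (rc n.+1) (Lst n.+1)) = (rc n.+1 (sp pi) \in Lst n.+1).
    apply/mapP/idP.
      by case=> u uL ->; rewrite rc_rc // (allP (Lst_perm _) _ uL).
    by move=> h; exists (rc n.+1 (sp pi)); rewrite ?rc_rc.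
  rewrite e; apply/idP/idP.
  + case/and3P => a1 a2 a3; apply/(key (isperm_rc pw)); apply/(good2_rc pw); split.
    * by move/contains312 => h; move/negP: a1; apply.
    * by move/contains3214 => h; move/negP: a2; apply.
    * by rewrite sq_sp => /contains312 h; move/negP: a3; apply.
  + move/(key (isperm_rc pw))/(good2_rc pw) => [g1 g2 g3]; apply/and3P; split; apply/negP.
    * by move/contains312.
    * by move/contains3214.
    * by move/contains312; rewrite -sq_sp.
Qed.
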